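(* Let $G$ be a finitely generated non-abelian free group and let $X$ be a finite generating set of $G$. Then no positive cone of $G$ is a coarsely connected subset of the Cayley graph $\Gamma(G,X)$.
   Context: A positive cone of a group $G$ is a subsemigroup $P\subseteq G$ with $G=P\sqcup P^{-1}\sqcup\{1\}$. $G$ is given the word metric $d_X$ of $\Gamma(G,X)$. For $r\geq1$, an $r$-path is a finite sequence $g_0,\dots,g_n$ in $G$ with $d_X(g_i,g_{i+1})\le r$ for all $i$. A subset $S\subseteq G$ is coarsely connected if there exists $r\geq 1$ such that any two elements of $S$ are joined by an $r$-path all of whose terms lie in $S$ (equivalently, some $r$-neighbourhood of $S$ spans a connected subgraph). *)

(* Defs.v *)
From mathcomp Require Import all_boot.
Set Implicit Arguments. Unset Strict Implicit. Unset Printing Implicit Defensive.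

(* Letters: generator index and sign (true = a_i, false = a_i^-1). *)
Definition letter (n : nat) := ('I_n * bool)%type.
Definition linv n (x : letter n) : letter n := (x.1, ~~ x.2).

Definition reduced n (w : seq (letter n)) : bool :=
  sorted (fun a b => b != linv a) w.

Definition push n (x : letter n) (s : seq (letter n)) : seq (letter n) :=
  match s with
  | y :: s' => if y == linv x then s' else x :: s
  | [::] => [:: x]
  end.

Definition red n (w : seq (letter n)) : seq (letter n) := foldr (@push n) [::] w.

Lemma push_reduced n (x : letter n) s : reduced s -> reduced (push x s).
Proof.
case: s => [|y s] //= Hs.
case: ifP => Hy.
- exact: (path_sorted Hs).
- by rewrite /reduced /= Hy Hs.
Qed.

Lemma red_reduced n (w : seq (letter n)) : reduced (red w).
Proof. by elim: w => [|x w IH] //=; apply: push_reduced. Qed.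

Definition FG (n : nat) := {w : seq (letter n) | reduced w}.

Definition fg_one n : FG n := exist _ [::] isT.
Definition fg_mul n (u v : FG n) : FG n :=
  exist _ (red (proj1_sig u ++ proj1_sig v)) (red_reduced _).
Definition fg_inv n (u : FG n) : FG n :=
  exist _ (red (rev (map (@linv n) (proj1_sig u)))) (red_reduced _).

Definition fg_prod n (s : seq (FG n)) : FG n := foldr (@fg_mul n) (fg_one n) s.

Definition in_symm n (X : seq (FG n)) (x : FG n) : Prop :=
  (x \in X) \/ (fg_inv x \in X).

Definition generates n (X : seq (FG n)) : Prop :=
  forall g : FG n, exists s : seq (FG n),
    (forall x, x \in s -> in_symm X x) /\ fg_prod s = g.

(* d_X(g,h) <= r for the word metric of the Cayley graph Gamma(F_n, X):
   g^{-1} h is a product of at most r elements of X^{+-1}. *)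
Definition dist_le n (X : seq (FG n)) (r : nat) (g h : FG n) : Prop :=
  exists s : seq (FG n), size s <= r /\
    (forall x, x \in s -> in_symm X x) /\ fg_mul g (fg_prod s) = h.

Definition positive_cone n (P : FG n -> Prop) : Prop :=
  (forall g h, P g -> P h -> P (fg_mul g h)) /\
  (forall g : FG n,
     let A := P g in let B := P (fg_inv g) in let C := g = fg_one n in
     (A \/ B \/ C) /\ ~ (A /\ B) /\ ~ (A /\ C) /\ ~ (B /\ C)).

Definition rpath_in n (X : seq (FG n)) (r : nat) (S : FG n -> Prop) (a b : FG n) : Prop :=
  exists (k : nat) (f : nat -> FG n),
    f 0 = a /\ f k = b /\ (forall i, i <= k -> S (f i)) /\
    (forall i, i < k -> dist_le X r (f i) (f i.+1)).

Definition coarsely_connected n (X : seq (FG n)) (S : FG n -> Prop) : Prop :=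
  exists r : nat, 1 <= r /\ forall a b, S a -> S b -> rpath_in X r S a b.

(* Main.v *)
Require Import Defs.
From mathcomp Require Import all_boot zify.
Set Implicit Arguments. Unset Strict Implicit. Unset Printing Implicit Defensive.

Section Words.
Variable n : nat.
Local Notation L := (letter n).
Definition winv (w : seq L) : seq L := rev (map (@linv n) w).

Lemma linvK : cancel (@linv n) (@linv n).
Proof. by case=> a b; rewrite /linv /= negbK. Qed.

Lemma winvK : cancel winv winv.
Proof. by move=> w; rewrite /winv map_rev revK (mapK linvK). Qed.

Lemma winv_cat a b : winv (a ++ b) = winv b ++ winv a.
Proof. by rewrite /winv map_cat rev_cat. Qed.

Lemma push_size x (s : seq L) : size (push x s) <= (size s).+1.
Proof. case: s => [|y s] //=; case: ifP => //= _; exact: leqW. Qed.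

Lemma red_size (w : seq L) : size (red w) <= size w.
Proof.
elim: w => [|x w IH] //=; apply: leq_trans (push_size _ _) _; by rewrite ltnS.
Qed.

Lemma red_id (w : seq L) : reduced w -> red w = w.
Proof.
elim: w => [|x w IH] //= Hw.
rewrite IH; last exact: path_sorted Hw.
case: w Hw {IH} => [|y w] //= /andP [Hy _].
by rewrite (negbTE Hy).
Qed.

Lemma push_cancel x (s : seq L) : reduced s -> push x (push (linv x) s) = s.
Proof.
case: s => [|y s] /=; first by rewrite eqxx.
move=> Hs; case: ifP => [/eqP Hy|_]; last by rewrite /= eqxx.
rewrite linvK in Hy; subst y.
case: s Hs => [|z s] //= /andP [Hz _].
by rewrite (negbTE Hz).
Qed.

Lemma foldr_push_reduced (s u : seq L) : reduced s -> reduced (foldr (@push n) s u).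
Proof. by move=> Hs; elim: u => [|x u IH] //=; apply: push_reduced. Qed.

Lemma foldr_push_push (s r : seq L) x : reduced s ->
  foldr (@push n) s (push x r) = push x (foldr (@push n) s r).
Proof.
move=> Hs; case: r => [|y r] //=; case: ifP => [/eqP ->|_] //=.
by rewrite push_cancel //; apply: foldr_push_reduced.
Qed.

Lemma foldr_red (s u : seq L) : reduced s ->
  foldr (@push n) s (red u) = foldr (@push n) s u.
Proof.
move=> Hs; elim: u => [|x u IH] //=.
by rewrite foldr_push_push // IH.
Qed.

Lemma red_cat (u v : seq L) : red (u ++ v) = foldr (@push n) (red v) u.
Proof. by rewrite /red foldr_cat. Qed.

Lemma redFl (u v : seq L) : red (red u ++ v) = red (u ++ v).
Proof. by rewrite !red_cat foldr_red // red_reduced. Qed.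

Lemma redFr (u v : seq L) : red (u ++ red v) = red (u ++ v).
Proof. by rewrite !red_cat red_id // red_reduced. Qed.

Lemma inv_cancel (s a : seq L) : reduced s ->
  foldr (@push n) (foldr (@push n) s a) (winv a) = s.
Proof.
move=> Hs; elim: a => [|x a IH] //=.
rewrite /winv /= rev_cons foldr_rcons.
have := push_cancel (linv x) (foldr_push_reduced a Hs).
rewrite linvK => ->; exact: IH.
Qed.

Lemma red_invl (a : seq L) : red (winv a ++ a) = [::].
Proof. by rewrite red_cat inv_cancel. Qed.

Lemma red_invr (a : seq L) : red (a ++ winv a) = [::].
Proof. by have := red_invl (winv a); rewrite winvK. Qed.

Lemma winv_reduced (w : seq L) : reduced w -> reduced (winv w).
Proof.
rewrite /reduced /winv rev_sorted sorted_map; apply: sub_sorted => x y /=.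
by rewrite linvK eq_sym.
Qed.

Lemma reduced_join a x y (b : seq L) : reduced (rcons a x) -> reduced (y :: b) ->
  y != linv x -> reduced (rcons a x ++ y :: b).
Proof.
rewrite /reduced; case: a => [|a0 a] /=.
  by move=> _ -> ->.
rewrite cat_path last_rcons => -> /= -> ->.
by [].
Qed.

Lemma foldr_push_take (s x : seq L) : reduced x -> exists k,
  [/\ k <= size s, k <= size x & foldr (@push n) s x = take (size x - k) x ++ drop k s].
Proof.
elim: x => [|y x IH] Hx.
  by exists 0; rewrite drop0.
rewrite /=; have [k [Hks Hkx ->]] := IH (path_sorted Hx).
case Ht: (take (size x - k) x) => [|z t].
- have Hk : k = size x.
    apply/eqP; rewrite eqn_leq Hkx /=.
    by move: (size_take (size x - k) x); rewrite Ht; case: ifP => /=; lia.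
  subst k; rewrite /=.
  case Hd: (drop (size x) s) => [|w d] /=.
  + exists (size x); split => //.
    have -> : (size x).+1 - size x = 1 by lia.
    by rewrite Hd /= take0.
  + case: ifP => [/eqP Hw|_].
    * exists (size x).+1; split => //.
      - by move: (size_drop (size x) s); rewrite Hd /=; lia.
      - by rewrite subnn /= -add1n -drop_drop Hd /= drop0.
    * exists (size x); split => //.
      have -> : (size x).+1 - size x = 1 by lia.
    by rewrite Hd /= take0.
- exists k; split => //; first lia.
  have Hlt : k < size x.
    by move: (size_take (size x - k) x); rewrite Ht; case: ifP => /=; lia.
  have E : size (y :: x) - k = (size x - k).+1 by rewrite /=; lia.
  rewrite E /= Ht /=.
  have Hz : z != linv y.
    clear E; case: x Hx Ht {IH Hlt Hkx} => [|x0 x] /=; first by move=> _; case: (_ - k).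
    case: (_ - k) => [|m] //= /andP [H _] [<- _]; exact: H.
  by rewrite (negbTE Hz).
Qed.
End Words.

Section Grp.
Variable n : nat.
Local Notation G := (FG n).
Local Notation "a * b" := (fg_mul a b).
Local Notation "a ^-1" := (fg_inv a).
Local Notation one := (fg_one n).

Lemma fg_eq (u v : G) : proj1_sig u = proj1_sig v -> u = v.
Proof.
case: u => u hu; case: v => v hv /= e; subst v.
by rewrite (bool_irrelevance hu hv).
Qed.

Lemma fmulA (a b c : G) : a * (b * c) = (a * b) * c.
Proof. by apply: fg_eq => /=; rewrite redFr redFl catA. Qed.

Lemma fmul1g (a : G) : one * a = a.
Proof. by apply: fg_eq => /=; rewrite red_id //; case: a. Qed.

Lemma fmulg1 (a : G) : a * one = a.
Proof. by apply: fg_eq => /=; rewrite cats0 red_id //; case: a. Qed.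

Lemma fmulVg (a : G) : a^-1 * a = one.
Proof. by apply: fg_eq => /=; rewrite redFl (red_invl (proj1_sig a)). Qed.

Lemma fmulgV (a : G) : a * a^-1 = one.
Proof. by apply: fg_eq => /=; rewrite redFr (red_invr (proj1_sig a)). Qed.

Lemma fmulKg (a b : G) : a^-1 * (a * b) = b.
Proof. by rewrite fmulA fmulVg fmul1g. Qed.

Lemma fmulKVg (a b : G) : a * (a^-1 * b) = b.
Proof. by rewrite fmulA fmulgV fmul1g. Qed.

Lemma finv_uniq (a b : G) : a * b = one -> a = b^-1.
Proof. by move=> H; rewrite -(fmulg1 a) -(fmulgV b) fmulA H fmul1g. Qed.

Lemma finvK (a : G) : (a^-1)^-1 = a.
Proof. by symmetry; apply: finv_uniq; rewrite fmulgV. Qed.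

Lemma finvM (a b : G) : (a * b)^-1 = b^-1 * a^-1.
Proof.
symmetry; apply: finv_uniq.
by rewrite -fmulA (fmulA (a^-1)) fmulVg fmul1g fmulVg.
Qed.

Lemma inv_size (a : G) : size (proj1_sig (a^-1)) <= size (proj1_sig a).
Proof. by apply: leq_trans (red_size _) _; rewrite size_rev size_map. Qed.

Lemma mul_size (a b : G) : size (proj1_sig (a * b)) <= size (proj1_sig a) + size (proj1_sig b).
Proof. by apply: leq_trans (red_size _) _; rewrite size_cat. Qed.
End Grp.

Lemma crossing (T : Type) (Q : T -> bool) (f : nat -> T) k :
  Q (f 0) -> ~~ Q (f k) -> exists i, i < k /\ Q (f i) /\ ~~ Q (f i.+1).
Proof.
move=> H0; elim: k => [|k IH] Hk; first by rewrite H0 in Hk.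
case Hq: (Q (f k)).
  by exists k; split.
have [i [Hi [H1 H2]]] := IH (negbT Hq).
by exists i; split => //; apply: ltnW.
Qed.

Fixpoint words n (k : nat) : seq (seq (letter n)) :=
  if k is k'.+1 then [::] :: [seq x :: w | x <- enum ([the finType of (('I_n * bool)%type)]), w <- words n k']
  else [:: [::]].

Lemma words_mem n k (w : seq (letter n)) : size w <= k -> w \in words n k.
Proof.
elim: k w => [|k IH] [|x w] //= Hw.
rewrite in_cons; apply/orP; right.
apply: (allpairs_f (fun x w => x :: w)); first by rewrite mem_enum.
exact: IH.
Qed.

Lemma strict_max n (P : FG n -> Prop)
  (Hmul : forall g h, P g -> P h -> P (fg_mul g h))
  (Htri : forall g : FG n, P g \/ P (fg_inv g) \/ g = fg_one n)
  p0 (Hp0 : P p0) (L : seq (FG n)) :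
  exists E, forall u, u \in L -> P (fg_mul (fg_inv u) E).
Proof.
elim: L => [|v L [E' HE']]; first by exists p0.
case: (Htri (fg_mul (fg_inv v) E')) => [HA|[HB|HC]].
- exists E' => u; rewrite in_cons => /orP [/eqP ->|Hu] //; exact: (HE' u Hu).
- exists (fg_mul v p0) => u; rewrite in_cons => /orP [/eqP ->|Hu].
    by rewrite fmulKg.
  rewrite finvM finvK in HB.
  have -> : fg_mul (fg_inv u) (fg_mul v p0) =
            fg_mul (fg_mul (fg_inv u) E') (fg_mul (fg_mul (fg_inv E') v) p0).
    by rewrite -!fmulA fmulKVg.
  apply: (Hmul); first exact: (HE' u Hu).
  by apply: (Hmul).
- have HE : E' = v by rewrite -(fmulKVg v E') HC fmulg1.
  exists (fg_mul v p0) => u; rewrite in_cons => /orP [/eqP ->|Hu].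
    by rewrite fmulKg.
  rewrite -HE fmulA; apply: (Hmul) => //; exact: (HE' u Hu).
Qed.

Definition lt n (x : letter n) : FG n := exist _ [:: x] isT.

Lemma sandwich_reduced n (c0 : letter n) c1 t :
  reduced (c0 :: c1) -> t.1 != (last c0 c1).1 ->
  reduced ((c0 :: c1) ++ t :: winv (c0 :: c1)).
Proof.
rewrite lastI; set b := belast c0 c1; set l := last c0 c1 => Hr Ht.
have Hw := winv_reduced Hr.
have Ew : winv (rcons b l) = linv l :: winv b by rewrite /winv map_rcons rev_rcons.
rewrite Ew in Hw *.
apply: reduced_join => //.
  rewrite /reduced /=. move: Hw; rewrite /reduced /= => ->; rewrite andbT.
  apply/negP; rewrite /linv => /eqP [E1 _]; by rewrite E1 eqxx in Ht.
- apply/negP; rewrite /linv => /eqP E1; by rewrite E1 /= eqxx in Ht.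
Qed.

Lemma winv_sandwich n (c : seq (letter n)) t :
  winv (c ++ t :: winv c) = c ++ linv t :: winv c.
Proof.
by rewrite winv_cat (_ : t :: winv c = [:: t] ++ winv c) // winv_cat winvK -catA.
Qed.

Lemma prefix_keep n (x t c : seq (letter n)) : reduced x -> take (size c) x = c ->
  size c + size t <= size x -> take (size c) (red (x ++ t)) = c.
Proof.
move=> Hx Hc Hs; rewrite red_cat.
have [k [Hk1 Hk2 ->]] := foldr_push_take (red t) Hx.
have Hk : k <= size t by apply: leq_trans Hk1 (red_size _).
rewrite takel_cat ?size_takel ?leq_subr //; last by lia.
by rewrite take_takel //; lia.
Qed.

Unset Implicit Arguments.
Theorem corollary1p2 (n : nat) (Hn : 2 <= n) (X : seq (FG n)) (HX : generates X)
  (P : FG n -> Prop) (HP : positive_cone P) :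
  ~ coarsely_connected X P.
Proof.
case: HP => Hmul Htri0.
have Htri : forall g, P g \/ P (fg_inv g) \/ g = fg_one n by move=> g; case: (Htri0 g).
have Hnot2 : forall g, P g -> P (fg_inv g) -> False.
  by move=> g H1 H2; case: (Htri0 g) => _ [H _]; apply: H.
have lt_pos : forall x, P (lt x) \/ P (lt (linv x)).
  move=> x; case: (Htri (lt x)) => [H|[H|H]]; [by left| right | by move/(congr1 (@proj1_sig _ _)): H].
  by have <- : fg_inv (lt x) = lt (linv x) by apply: fg_eq.
pose i0 : 'I_n := Ordinal (ltnW Hn).
pose i1 : 'I_n := Ordinal Hn.
pose other (i : 'I_n) := if i == i0 then i1 else i0.
have other_neq : forall i, other i != i.
  move=> i; rewrite /other; case: ifP => [/eqP ->|/negbT]; last by rewrite eq_sym.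
  by apply/negP => /eqP /(congr1 val).
have lt_pos' : forall j, exists y : letter n, y.1 = j /\ P (lt y).
  by move=> j; case: (lt_pos (j, true)) => H; [exists (j, true) | exists (j, false)].
move=> [r [Hr Hcc]].
pose Lm := \max_(x <- X) size (proj1_sig x).
have HXb : forall x, in_symm X x -> size (proj1_sig x) <= Lm.
  move=> x [Hx|Hx]; first exact: leq_bigmax_seq.
  rewrite -(finvK x); apply: leq_trans (inv_size _) _; exact: leq_bigmax_seq.
have Hprod : forall s, (forall x, x \in s -> in_symm X x) ->
    size (proj1_sig (fg_prod s)) <= size s * Lm.
  elim => [|x s IH] Hs //=.
  apply: leq_trans (mul_size _ _) _; rewrite mulSn leq_add //.
    by apply: HXb; apply: Hs; rewrite mem_head.
  by apply: IH => y Hy; apply: Hs; rewrite in_cons Hy orbT.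
pose K := r * Lm.
have Hdist : forall g h, dist_le X r g h -> exists t, size (proj1_sig t) <= K /\ h = fg_mul g t.
  move=> g h [s [Hs [Hin <-]]]; exists (fg_prod s); split => //.
  by apply: leq_trans (Hprod s Hin) _; apply: leq_mul.
pose B := map (fun w => exist (fun w => reduced w) (red w) (red_reduced w)) (words n K.+1).
have HB : forall g, size (proj1_sig g) <= K.+1 -> g \in B.
  move=> g Hg; apply/mapP; exists (proj1_sig g); first exact: words_mem.
  by apply: fg_eq => /=; rewrite red_id //; case: g {Hg}.
have [p0 Hp0] : exists p0, P p0.
  by have [y [_ Hy]] := lt_pos' i0; exists (lt y).
have [E HE] := strict_max Hmul Htri Hp0 B.
pose c' := fg_inv E.
have Hneg : forall w, size (proj1_sig w) <= K.+1 -> ~ P (fg_mul c' w).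
  move=> w Hw Hcw; have := HE w (HB w Hw).
  have -> : fg_mul (fg_inv w) E = fg_inv (fg_mul c' w) by rewrite finvM /c' finvK.
  exact: Hnot2.
have Hc'r : reduced (proj1_sig c') := proj2_sig c'.
have [Hc|[c0 [c1 Hc]]] : proj1_sig c' = [::] \/ exists c0 c1, proj1_sig c' = c0 :: c1.
  by move: (proj1_sig c') => s; case: s => [|c0 c1]; [left|right; exists c0, c1].
all: rewrite Hc in Hc'r.
  have [y [_ Hy]] := lt_pos' i0.
  apply: (Hneg (lt y)) => //.
  have -> : fg_mul c' (lt y) = lt y.
    by apply: fg_eq; change (red (proj1_sig c' ++ [:: y]) = [:: y]); rewrite Hc.
  by [].
pose c := c0 :: c1.
pose Q (g : FG n) := take (size c) (proj1_sig g) == c.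
have [y [Hy1 Hyb]] := lt_pos' (other c0.1).
have Qb : ~~ Q (lt y).
  rewrite /Q /c /=; apply/negP => /eqP [E1 E2].
  by move: (other_neq c0.1); rewrite -Hy1 E1 eqxx.
have [a [Ha Qa]] : exists a, P a /\ Q a.
  pose t : letter n := (other (last c0 c1).1, true).
  have Hred : forall t' : letter n, t'.1 = t.1 -> reduced (c ++ t' :: winv c).
    by move=> t' Ht'; apply: sandwich_reduced => //; rewrite /=; rewrite Ht' other_neq.
  pose A := exist (fun w => reduced w) (c ++ t :: winv c) (Hred t erefl).
  have QA : forall g, proj1_sig g = c ++ (proj1_sig g ++ [::]) -> True by [].
  case: (Htri A) => [HA|[HA|HA]].
  - by exists A; split => //; rewrite /Q /= take_size_cat.
  - exists (fg_inv A); split => //.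
    have EA : proj1_sig (fg_inv A) = c ++ linv t :: winv c.
      change (red (winv (c ++ t :: winv c)) = c ++ linv t :: winv c).
      by rewrite winv_sandwich red_id //; apply: (Hred).
    by rewrite /Q EA take_size_cat.
  - by move/(congr1 (fun g => size (proj1_sig g))): HA; rewrite /= size_cat.
have [k [f [Hf0 [Hfk [HfP Hstep]]]]] := Hcc a (lt y) Ha Hyb.
have Q0 : Q (f 0) by rewrite Hf0.
have Qk : ~~ Q (f k) by rewrite Hfk.
have [i [Hi [Qi Qi1]]] := @crossing _ Q f k Q0 Qk.
have [t [Ht Hft]] := Hdist _ _ (Hstep i Hi).
set x := proj1_sig (f i).
have Hx : reduced x by rewrite /x; case: (f i).
have Hxc : take (size c) x = c by apply/eqP.
have Hlt : size x < size c + size (proj1_sig t).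
  rewrite ltnNge; apply/negP => Hle.
  move: Qi1; rewrite /Q Hft.
  change (~~ (take (size c) (red (x ++ proj1_sig t)) == c) -> False).
  by rewrite prefix_keep // eqxx.
pose w := exist (fun w => reduced w) (drop (size c) x) (drop_sorted _ Hx).
apply: (Hneg w).
  rewrite /= size_drop; move: Hlt Ht; rewrite /c /=; lia.
have -> : fg_mul c' w = f i.
  apply: fg_eq; change (red (proj1_sig c' ++ drop (size c) x) = x).
  by rewrite Hc -/c -{1}Hxc cat_take_drop red_id.
exact: HfP (ltnW Hi).
Qed.
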